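(* Let $M=\{D(c_1;r_1),D(c_2;r_2),D(c_3;r_3)\}$ be a 2-disk system whose centers $c_1,c_2,c_3$ lie on a common line, with Vietoris–Rips scale $\nu_M>0$. Then $\mu_M=\nu_M$; equivalently (for pairwise distinct disks) $\rho_M(\nu_M)\ge0$.
   Context: A 2-disk system is a finite collection of closed disks $D(c_i;r_i)\subset\mathbb R^2$ with $r_i>0$. $\nu_M=\max_{i<j}\|c_i-c_j\|/(r_i+r_j)$ (Vietoris–Rips scale) and $\mu_M=\inf\{\lambda\ge0:\bigcap_i D(c_i;\lambda r_i)\ne\emptyset\}$ (Čech scale). Definition of $d_{ij}$ for two intersecting disks $D_i,D_j$ ($i\ne j$): write $c_j-c_i=(a,b)$, $\mathbf n_{ij}=(-b,a)$; if the boundary circles meet, $d_{ij}$ is the unique common boundary point with $\langle d_{ij}-c_i,\mathbf n_{ij}\rangle\ge0$; otherwise, with $\lambda_0=\|c_i-c_j\|/|r_i-r_j|$, $d_{ij}$ is the unique point of $\partial D(c_i;\lambda_0r_i)\cap\partial D(c_j;\lambda_0r_j)$ (equal to $c_i$ if $c_i=c_j$). $d_{ij}(\lambda)$ is this point for the disks rescaled by $\lambda$, and $\rho_M(\lambda)=\max_{i\ne j}\min_{k\notin\{i,j\}}(\lambda r_k-\|d_{ij}(\lambda)-c_k\|)$ for $\lambda\ge\nu_M$. *)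

(* Defs.v *)
From Stdlib Require Import Reals.
Open Scope R_scope.

Definition pt := (R * R)%type.

Definition dist2 (p q : pt) : R :=
  sqrt ((fst p - fst q) ^ 2 + (snd p - snd q) ^ 2).

Definition in_disk (c : pt) (r : R) (p : pt) : Prop := dist2 p c <= r.

Definition collinear3 (c1 c2 c3 : pt) : Prop :=
  exists (p d : pt), (fst d <> 0 \/ snd d <> 0) /\
    forall c, (c = c1 \/ c = c2 \/ c = c3) ->
      exists t : R, c = (fst p + t * fst d, snd p + t * snd d).

Definition nu3 (c1 c2 c3 : pt) (r1 r2 r3 : R) : R :=
  Rmax (dist2 c1 c2 / (r1 + r2))
       (Rmax (dist2 c1 c3 / (r1 + r3)) (dist2 c2 c3 / (r2 + r3))).

(* the set whose infimum is the Cech scale mu_M *)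
Definition cech_set (c1 c2 c3 : pt) (r1 r2 r3 : R) (l : R) : Prop :=
  0 <= l /\ exists p : pt,
    in_disk c1 (l * r1) p /\ in_disk c2 (l * r2) p /\ in_disk c3 (l * r3) p.

Definition is_inf (S : R -> Prop) (m : R) : Prop :=
  (forall x, S x -> m <= x) /\ (forall b, (forall x, S x -> b <= x) -> b <= m).

(* Main.v *)
Require Import Defs.
From Stdlib Require Import Reals Rgeom Lra.
Open Scope R_scope.

Lemma dist2_euc p q : dist2 p q = dist_euc (fst p) (snd p) (fst q) (snd q).
Proof. unfold dist2, dist_euc. f_equal. unfold Rsqr. ring. Qed.

Lemma dist2_sym p q : dist2 p q = dist2 q p.
Proof. unfold dist2. f_equal. ring. Qed.

Lemma dist2_tri p q r : dist2 p q <= dist2 p r + dist2 r q.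
Proof. rewrite !dist2_euc. apply triangle. Qed.

Lemma div_le a c l : 0 < c -> a <= l * c -> a / c <= l.
Proof.
  intros Hc H. unfold Rdiv.
  apply Rmult_le_reg_r with c; auto.
  rewrite Rmult_assoc, Rinv_l by lra. lra.
Qed.

Lemma le_div a c l : 0 < c -> a / c <= l -> a <= l * c.
Proof.
  intros Hc H.
  replace a with (a / c * c) by (field; lra).
  apply Rmult_le_compat_r; lra.
Qed.

Lemma dist_line (p d : pt) t u :
  dist2 (fst p + t * fst d, snd p + t * snd d) (fst p + u * fst d, snd p + u * snd d)
  = Rabs (t - u) * sqrt (fst d ^ 2 + snd d ^ 2).
Proof.
  unfold dist2; cbn [fst snd].
  replace ((fst p + t * fst d - (fst p + u * fst d)) ^ 2 +
           (snd p + t * snd d - (snd p + u * snd d)) ^ 2)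
    with (Rsqr (t - u) * (fst d ^ 2 + snd d ^ 2)) by (unfold Rsqr; ring).
  rewrite sqrt_mult_alt by apply Rle_0_sqr.
  rewrite sqrt_Rsqr_abs. reflexivity.
Qed.

Lemma helly1 t1 t2 t3 a1 a2 a3 :
  Rabs (t1 - t2) <= a1 + a2 -> Rabs (t1 - t3) <= a1 + a3 -> Rabs (t2 - t3) <= a2 + a3 ->
  0 <= a1 -> 0 <= a2 -> 0 <= a3 ->
  let s := Rmax (t1 - a1) (Rmax (t2 - a2) (t3 - a3)) in
  Rabs (s - t1) <= a1 /\ Rabs (s - t2) <= a2 /\ Rabs (s - t3) <= a3.
Proof.
  intros H12 H13 H23 h1 h2 h3 s. unfold s, Rmax in *.
  revert H12 H13 H23.
  repeat destruct Rle_dec; unfold Rabs; repeat destruct Rcase_abs; intros; lra.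
Qed.

Theorem mainTheorem8 (c1 c2 c3 : pt) (r1 r2 r3 : R)
  (hr1 : 0 < r1) (hr2 : 0 < r2) (hr3 : 0 < r3)
  (hcol : collinear3 c1 c2 c3)
  (hnu : 0 < nu3 c1 c2 c3 r1 r2 r3) :
  is_inf (cech_set c1 c2 c3 r1 r2 r3) (nu3 c1 c2 c3 r1 r2 r3).
Proof.
  split.
  - intros l [hl [p [h1 [h2 h3]]]]. unfold in_disk in *.
    unfold nu3. apply Rmax_lub; [|apply Rmax_lub]; apply div_le; try lra.
    + pose proof (dist2_tri c1 c2 p). rewrite (dist2_sym c1 p) in H. lra.
    + pose proof (dist2_tri c1 c3 p). rewrite (dist2_sym c1 p) in H. lra.
    + pose proof (dist2_tri c2 c3 p). rewrite (dist2_sym c2 p) in H. lra.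
  - intros b Hb. apply Hb.
    set (nu := nu3 c1 c2 c3 r1 r2 r3).
    assert (H12 : dist2 c1 c2 <= nu * (r1 + r2)).
    { apply le_div; [lra|]. unfold nu, nu3. apply Rmax_l. }
    assert (H13 : dist2 c1 c3 <= nu * (r1 + r3)).
    { apply le_div; [lra|]. unfold nu, nu3. eapply Rle_trans; [|apply Rmax_r]. apply Rmax_l. }
    assert (H23 : dist2 c2 c3 <= nu * (r2 + r3)).
    { apply le_div; [lra|]. unfold nu, nu3. eapply Rle_trans; [|apply Rmax_r]. apply Rmax_r. }
    assert (Hnu0 : 0 < nu) by exact hnu.
    clearbody nu.
    destruct hcol as [p [d [hd Hc]]].
    destruct (Hc c1) as [t1 E1]; [auto|].
    destruct (Hc c2) as [t2 E2]; [auto|].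
    destruct (Hc c3) as [t3 E3]; [auto|].
    subst c1 c2 c3.
    set (N := sqrt (fst d ^ 2 + snd d ^ 2)).
    assert (HN : 0 < N).
    { unfold N. apply sqrt_lt_R0. destruct hd as [h|h].
      - pose proof (pow2_ge_0 (snd d)). assert (0 < fst d ^ 2) by (simpl; rewrite Rmult_1_r; apply Rsqr_pos_lt; auto). lra.
      - pose proof (pow2_ge_0 (fst d)). assert (0 < snd d ^ 2) by (simpl; rewrite Rmult_1_r; apply Rsqr_pos_lt; auto). lra. }
    rewrite !dist_line in H12, H13, H23. fold N in H12, H13, H23.
    assert (K : forall t u a c, Rabs (t - u) * N <= nu * (a + c) ->
               Rabs (t - u) <= nu * a / N + nu * c / N).
    { intros t u a c H. replace (nu * a / N + nu * c / N) with (nu * (a + c) / N) by (field; lra).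
      apply Rmult_le_reg_r with N; auto. replace (nu * (a + c) / N * N) with (nu * (a+c)) by (field; lra).
      exact H. }
    assert (P : forall r, 0 < r -> 0 <= nu * r / N).
    { intros r hr. unfold Rdiv. apply Rmult_le_pos; [apply Rmult_le_pos; lra|].
      apply Rlt_le, Rinv_0_lt_compat; auto. }
    destruct (helly1 t1 t2 t3 (nu * r1 / N) (nu * r2 / N) (nu * r3 / N)
               (K _ _ _ _ H12) (K _ _ _ _ H13) (K _ _ _ _ H23) (P _ hr1) (P _ hr2) (P _ hr3))
      as [A1 [A2 A3]].
    set (s := Rmax (t1 - nu * r1 / N) (Rmax (t2 - nu * r2 / N) (t3 - nu * r3 / N))) in *.
    assert (G : forall t r, Rabs (s - t) <= nu * r / N -> Rabs (s - t) * N <= nu * r).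
    { intros t r H. replace (nu * r) with (nu * r / N * N) by (field; lra).
      apply Rmult_le_compat_r; lra. }
    split; [lra|].
    exists (fst p + s * fst d, snd p + s * snd d).
    unfold in_disk. rewrite !dist_line. fold N.
    repeat split; apply G; auto.
Qed.
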